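(* Let $S$ be a string of length $n$ over a totally ordered alphabet, let $i\in[1,n]$ and $j=\mathrm{nss}[i]\ne n+1$. If $\mathrm{rlce}(i,j)\ge j-i$, then $\mathrm{rlce}(j,j+(j-i))=\mathrm{rlce}(i,j)-(j-i)$ and $\mathrm{nss}[j]=j+(j-i)$.
   Context: For $i\in[1,n+1]$, $S_i=S[i..n]$ ($S_{n+1}$ is the empty string); $\prec$ is the induced lexicographical order. $\mathrm{nss}[i]=\min\{j \mid j=n+1 \text{ or } (j\in(i,n] \text{ and } S_i\succ S_j)\}$ for $i\in[1,n]$. $\mathrm{rlce}(a,b)$ is the length of the longest common prefix of $S_a$ and $S_b$. *)

(* Defs.v *)
From mathcomp Require Import all_boot all_order.
Set Implicit Arguments. Unset Strict Implicit. Unset Printing Implicit Defensive.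
Import Order.TTheory.
Local Open Scope order_scope.

(* Strings over a totally ordered alphabet T are sequences [seq T];
   positions are 1-based: S[i] = nth _ S (i-1). *)

Section Strings.
Context {disp : Order.disp_t} {T : orderType disp}.

Fixpoint lexlt (s t : seq T) : bool :=
  match s, t with
  | _, [::] => false
  | [::], _ :: _ => true
  | x :: s', y :: t' => (x < y) || ((x == y) && lexlt s' t')
  end.

Definition suf (S : seq T) (i : nat) : seq T := drop i.-1 S.

(* nss[i] = min { j | j = n+1 or (i < j <= n and S_i > S_j) }. *)
Definition nss (S : seq T) (i : nat) : nat :=
  head (size S).+1 [seq j <- iota i.+1 (size S - i) | lexlt (suf S j) (suf S i)].

Fixpoint lcp (s t : seq T) : nat :=
  match s, t with
  | x :: s', y :: t' => if x == y then (lcp s' t').+1 else 0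
  | _, _ => 0
  end.

Definition rlce (S : seq T) (a b : nat) : nat := lcp (suf S a) (suf S b).

End Strings.

(* Main.v *)
Require Import Defs.
From mathcomp Require Import all_boot all_order.
From mathcomp Require Import zify.
Import Order.TTheory.
Set Implicit Arguments. Unset Strict Implicit.

Section L.
Context {disp : Order.disp_t} {T : orderType disp}.
Implicit Types s t p : seq T.

Lemma lexlt_cat p s t : lexlt (p ++ s) (p ++ t) = lexlt s t.
Proof. elim: p => //= x p ->; by rewrite ltxx eqxx. Qed.

Lemma lcp_cat p s t : lcp (p ++ s) (p ++ t) = size p + lcp s t.
Proof. elim: p => //= x p ->; by rewrite eqxx. Qed.

Lemma lcp_size s t : lcp s t <= size s /\ lcp s t <= size t.
Proof.
elim: s t => [|x s IH] [|y t] //=; case: eqP => // _; have := IH t; simpl; lia.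
Qed.

Lemma lcp_sym s t : lcp s t = lcp t s.
Proof.
elim: s t => [|x s IH] [|y t] //=; rewrite eq_sym; case: eqP => //; by rewrite IH.
Qed.

Lemma lcp_take_eq k s t : k <= lcp s t -> take k s = take k t.
Proof.
elim: s t k => [|x s IH] [|y t] [|k] //=; case: eqP => // -> H.
by rewrite (IH t k).
Qed.

Lemma lcp_take k s t : lcp (take k s) (take k t) = minn k (lcp s t).
Proof.
elim: s t k => [|x s IH] [|y t] [|k] //=; case: eqP => // _.
by rewrite IH minnSS.
Qed.

Lemma split_lcp k s t : k <= lcp s t ->
  lcp s t = k + lcp (drop k s) (drop k t) /\ lexlt s t = lexlt (drop k s) (drop k t).
Proof.
move=> H; have [H1 H2] := lcp_size s t.
rewrite -{1 3}(cat_take_drop k s) -{1 3}(cat_take_drop k t) (lcp_take_eq H).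
rewrite lcp_cat lexlt_cat size_take_min; split => //; lia.
Qed.

Lemma lexlt_take k s t : lcp s t < k -> k <= size s -> k <= size t ->
  lexlt s t = lexlt (take k s) (take k t).
Proof.
elim: s t k => [|x s IH] [|y t] [|k] //=; case: eqP => [->|_] H1 H2 H3.
  by rewrite (IH t k).
by [].
Qed.

Lemma lexlt_co (x y z : seq T) : lexlt x z -> lexlt x y || lexlt y z.
Proof.
elim: x y z => [|a x IH] [|b y] [|c z] //=.
case/orP => [ac|/andP [/eqP <- H]].
  case: (ltgtP a b) => [ab|ba|eab] //=; try subst b.
    by rewrite (lt_trans ba ac).
  by rewrite ac orbT.
case: (ltgtP a b) => [ab|ba|eab] //=; try subst b.
exact: IH.
Qed.

Lemma key (A : seq T) d : 0 < d -> lexlt (drop d A) A -> d <= lcp A (drop d A) ->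
  (forall e, 0 < e < d -> ~~ lexlt (drop e A) A) ->
  forall e, 0 < e < d -> ~~ lexlt (drop e (drop d A)) (drop d A).
Proof.
move=> d0 HBA HL H2 e He; have /andP [e0 ed] := He.
set B := drop d A in HBA HL *.
have [sA sB] := lcp_size A B.
have [c Ec] : exists c, c = lcp (drop e A) A by eexists.
have [Hc|Hc] := ltnP c (d - e).
  have [k Ek] : exists k, k = c.+1 by eexists.
  have eL : e <= lcp A B by lia.
  have [E _] := split_lcp eL.
  have t1 : take k (drop e B) = take k (drop e A).
    apply: lcp_take_eq; rewrite lcp_sym; lia.
  have t2 : take k B = take k A by apply: lcp_take_eq; rewrite lcp_sym; lia.
  have l1 : lcp (drop e B) B < k.
    have := lcp_take k (drop e B) B.
    rewrite t1 t2 lcp_take -Ec => M.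
    have : minn k (lcp (drop e B) B) < k by rewrite -M; lia.
    lia.
  have [sdA _] := lcp_size (drop e A) (drop e B).
  have [sdB _] := lcp_size (drop e B) (drop e A).
  rewrite lcp_sym in sdB.
  rewrite (lexlt_take l1); try lia.
  rewrite t1 t2 -lexlt_take; try lia.
  by apply: H2.
have [b Eb] : exists b, b = d - e by eexists.
have tb : take b (drop e A) = take b A by apply: lcp_take_eq; lia.
have E1 : drop e A = take b A ++ B.
  by rewrite -{1}(cat_take_drop b (drop e A)) tb drop_drop /B; congr (_ ++ drop _ _); lia.
have := H2 e He.
rewrite E1 -{2}(cat_take_drop b A) lexlt_cat => H3.
have H4 : ~~ lexlt (drop b A) A by apply: H2; lia.
by have := lexlt_co (drop b A) HBA; rewrite (negbTE H3) (negbTE H4).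
Qed.

Lemma hfi (P : pred nat) a len x0 :
 (head x0 [seq j <- iota a len | P j] = x0 /\ forall k, a <= k < a + len -> ~~ P k) \/
 (a <= head x0 [seq j <- iota a len | P j] < a + len /\ P (head x0 [seq j <- iota a len | P j]) /\
   forall k, a <= k < head x0 [seq j <- iota a len | P j] -> ~~ P k).
Proof.
elim: len a => [|len IH] a /=.
  left; split => // k; lia.
case: ifP => Pa /=.
  right; split; first lia; split => // k; lia.
have [[E1 E2]|[E1 [E2 E3]]] := IH a.+1.
  left; split => // k Hk.
  have [->|ne] := eqVneq k a; first by rewrite Pa.
  apply: E2; lia.
right; split; first lia; split => // k Hk.
have [->|ne] := eqVneq k a; first by rewrite Pa.
apply: E3; lia.
Qed.

Lemma suf_add (S : seq T) i m : 0 < i -> suf S (i + m) = drop m (suf S i).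
Proof. move=> i0; rewrite /suf drop_drop; congr drop; lia. Qed.

Theorem lemma10' (S : seq T) (i : nat) :
  (1 <= i <= size S)%N ->
  nss S i <> (size S).+1 ->
  (nss S i - i <= rlce S i (nss S i))%N ->
  rlce S (nss S i) (nss S i + (nss S i - i)) = (rlce S i (nss S i) - (nss S i - i))%N /\
  nss S (nss S i) = (nss S i + (nss S i - i))%N.
Proof.
move=> /andP [i1 iS] Hne.
have [[E1 _]|[Hj [Pj Hbef]]] := hfi (fun j => lexlt (suf S j) (suf S i)) i.+1 (size S - i) (size S).+1.
  by rewrite /nss E1 in Hne.
rewrite -/(nss S i) in Hj Pj Hbef.
move: Hj Pj Hbef; set j := nss S i => Hj Pj Hbef.
have [d Ed] : exists d, d = j - i by eexists.
rewrite -Ed /rlce => HL.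
set A := suf S i in Pj Hbef HL *.
have EB : suf S j = drop d A by rewrite /A -suf_add //; congr suf; lia.
have EC : suf S (j + d) = drop d (suf S j) by rewrite suf_add //; lia.
rewrite EC EB in HL *.
have [sA sB] := lcp_size A (drop d A).
have [E _] := split_lcp HL.
split; first lia.
have HBA : lexlt (drop d A) A by rewrite -EB.
have K := key (A:=A) (d:=d) ltac:(lia) HBA HL.
have K2 : forall e, 0 < e < d -> ~~ lexlt (drop e (drop d A)) (drop d A).
  apply: K => e He; have /andP [e0 ed] := He.
  have := Hbef (i + e); rewrite /A -suf_add //; apply; lia.
have szB : size (drop d A) = size S - j.-1 by rewrite -EB /suf size_drop.
have Pd : j + d <= size S -> lexlt (suf S (j + d)) (suf S j).
  move=> _; rewrite EC EB.
  have HL' : d <= lcp (drop d A) A by rewrite lcp_sym.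
  have [_ <-] := split_lcp HL'; exact: HBA.
have Kk : forall k, j < k < j + d -> ~~ lexlt (suf S k) (suf S j).
  move=> k Hk; have -> : k = j + (k - j) by lia.
  rewrite suf_add; last lia. rewrite EB; apply: K2; lia.
have [[F1 F2]|[F1 [F2 F3]]] := hfi (fun k => lexlt (suf S k) (suf S j)) j.+1 (size S - j) (size S).+1.
  rewrite /nss F1.
  have [le|gt] := leqP (j + d) (size S); last lia.
  have := F2 (j + d); rewrite Pd //; move=> /(_ ltac:(lia)) //.
rewrite /nss -/(nss S j) in F1 F2 F3 *.
have [lt|ge] := ltnP (nss S j) (j + d).
  by have := Kk (nss S j) ltac:(lia); rewrite F2.
have [eq|gt] := eqVneq (nss S j) (j + d); first by [].
have := F3 (j + d) ltac:(lia); rewrite Pd //; lia.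
Qed.
End L.

Theorem lemma10 (disp : Order.disp_t) (T : orderType disp) (S : seq T) (i : nat) :
  (1 <= i <= size S)%N ->
  nss S i <> (size S).+1 ->
  (nss S i - i <= rlce S i (nss S i))%N ->
  rlce S (nss S i) (nss S i + (nss S i - i)) = (rlce S i (nss S i) - (nss S i - i))%N /\
  nss S (nss S i) = (nss S i + (nss S i - i))%N.
Proof. exact: lemma10'. Qed.
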